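(* Let $\alpha:\mathbb{C}\to\mathbb{C}$ be an exponential automorphism, i.e. a function satisfying $\alpha(z_1+z_2)=\alpha(z_1)+\alpha(z_2)$ and $\alpha(e^z)=e^{\alpha(z)}$ for all $z,z_1,z_2\in\mathbb{C}$. Let $r$ be a positive rational number, let $k$ be a positive integer, and let $r^{1/k}$ denote the positive real $k$th root of $r$. Then $\alpha(r^{1/k})=\zeta r^{1/k}$ for some $k$th root of unity $\zeta$. *)

(* Defs.v *)
From Stdlib Require Import Reals QArith Qreals.
From Coquelicot Require Import Coquelicot.
Open Scope R_scope.

Definition Cexp (z : C) : C :=
  (exp (Re z) * cos (Im z), exp (Re z) * sin (Im z)).

Definition exp_automorphism (alpha : C -> C) : Prop :=
  (forall z1 z2 : C, alpha (Cplus z1 z2) = Cplus (alpha z1) (alpha z2)) /\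
  (forall z : C, alpha (Cexp z) = Cexp (alpha z)).

Definition real_root (k : nat) (r : R) : R := Rpower r (/ INR k).

(* Main.v *)
Require Import Defs.
From Stdlib Require Import Reals QArith Qreals.
From Coquelicot Require Import Coquelicot.
From Stdlib Require Import Lra Lia ZArith.

Lemma Cexp_add (a b : C) : Cexp (Cplus a b) = Cmult (Cexp a) (Cexp b).
Proof.
  destruct a as [a1 a2], b as [b1 b2]. unfold Cexp, Cplus, Cmult; simpl.
  rewrite exp_plus, cos_plus, sin_plus. f_equal; ring.
Qed.

Lemma Cexp_R (x : R) : Cexp (RtoC x) = RtoC (exp x).
Proof. unfold Cexp, RtoC; simpl. rewrite cos_0, sin_0. f_equal; ring. Qed.

Lemma natmul_S (n : nat) (z : C) :
  Cmult (RtoC (INR (S n))) z = Cplus z (Cmult (RtoC (INR n)) z).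
Proof. destruct z as [a b]. rewrite S_INR. unfold Cmult, Cplus, RtoC; simpl. f_equal; ring. Qed.

Lemma alpha0 alpha : exp_automorphism alpha -> alpha (RtoC 0) = RtoC 0.
Proof.
  intros [Ha _]. assert (H := Ha (RtoC 0) (RtoC 0)).
  replace (Cplus (RtoC 0) (RtoC 0)) with (RtoC 0) in H
    by (unfold Cplus, RtoC; simpl; f_equal; ring).
  destruct (alpha (RtoC 0)) as [u v] eqn:E. unfold Cplus in H; simpl in H.
  injection H; intros; unfold RtoC; f_equal; lra.
Qed.

Lemma alpha_nat alpha : exp_automorphism alpha -> forall n z,
  alpha (Cmult (RtoC (INR n)) z) = Cmult (RtoC (INR n)) (alpha z).
Proof.
  intros Hal n z. induction n.
  - simpl. replace (Cmult (RtoC 0) z) with (RtoC 0)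
      by (destruct z; unfold Cmult, RtoC; simpl; f_equal; ring).
    rewrite alpha0 by exact Hal. destruct (alpha z); unfold Cmult, RtoC; simpl; f_equal; ring.
  - rewrite !natmul_S. destruct Hal as [Ha _]. rewrite Ha, IHn. reflexivity.
Qed.

Lemma alpha1 alpha : exp_automorphism alpha -> alpha (RtoC 1) = RtoC 1.
Proof.
  intros Hal. pose proof Hal as [_ He].
  replace (RtoC 1) with (Cexp (RtoC 0)) by (rewrite Cexp_R, exp_0; reflexivity).
  rewrite He, alpha0 by exact Hal. reflexivity.
Qed.

Lemma Cpow_Cexp (z : C) (n : nat) : Cpow (Cexp z) n = Cexp (Cmult (RtoC (INR n)) z).
Proof.
  induction n.
  - simpl. replace (Cmult (RtoC 0) z) with (RtoC 0)
      by (destruct z; unfold Cmult, RtoC; simpl; f_equal; ring).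
    rewrite Cexp_R, exp_0. reflexivity.
  - simpl Cpow. rewrite IHn, natmul_S, Cexp_add. reflexivity.
Qed.

Lemma Cpow_mul (a b : C) (n : nat) : Cpow (Cmult a b) n = Cmult (Cpow a n) (Cpow b n).
Proof.
  induction n.
  - simpl. unfold Cmult, RtoC; simpl. f_equal; ring.
  - simpl Cpow. rewrite IHn. destruct a, b, (Cpow (r,r0) n), (Cpow (r1, r2) n).
    unfold Cmult; simpl. f_equal; ring.
Qed.

Lemma Cpow_R (b : R) (n : nat) : Cpow (RtoC b) n = RtoC (b ^ n).
Proof.
  induction n.
  - reflexivity.
  - simpl Cpow. rewrite IHn. unfold Cmult, RtoC; simpl. f_equal; ring.
Qed.

Lemma alpha_posrat alpha : exp_automorphism alpha -> forall p q : nat, (0 < q)%nat ->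
  alpha (RtoC (INR p / INR q)) = RtoC (INR p / INR q).
Proof.
  intros Hal p q Hq.
  assert (Hq' : 0 < INR q) by (apply lt_0_INR; lia).
  assert (H1 : alpha (Cmult (RtoC (INR q)) (RtoC (INR p / INR q))) = RtoC (INR p)).
  { replace (Cmult (RtoC (INR q)) (RtoC (INR p / INR q))) with (Cmult (RtoC (INR p)) (RtoC 1))
      by (unfold Cmult, RtoC; simpl; f_equal; field; lra).
    rewrite alpha_nat, alpha1 by exact Hal. unfold Cmult, RtoC; simpl; f_equal; ring. }
  rewrite alpha_nat in H1 by exact Hal.
  destruct (alpha (RtoC (INR p / INR q))) as [u v].
  unfold Cmult, RtoC in H1; simpl in H1. injection H1; intros E2 E1.
  unfold RtoC. f_equal.
  - apply (Rmult_eq_reg_l (INR q)); [|lra]. field_simplify; lra.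
  - apply (Rmult_eq_reg_l (INR q)); [|lra]. lra.
Qed.

Lemma Q2R_posnat (r : Q) : (0 < r)%Q -> exists p q : nat, (0 < q)%nat /\ Q2R r = INR p / INR q.
Proof.
  intros Hr. destruct r as [n d]. unfold Qlt in Hr; simpl in Hr.
  exists (Z.to_nat n), (Pos.to_nat d). split; [lia|].
  unfold Q2R; simpl. rewrite !INR_IZR_INZ. rewrite Z2Nat.id by lia.
  rewrite positive_nat_Z. reflexivity.
Qed.

Theorem mainTheorem4 (alpha : C -> C) (Halpha : exp_automorphism alpha)
  (r : Q) (hr : (0 < r)%Q) (k : nat) (hk : (0 < k)%nat) :
  exists zeta : C, Cpow zeta k = RtoC 1 /\
    alpha (RtoC (real_root k (Q2R r))) = Cmult zeta (RtoC (real_root k (Q2R r))).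
Proof.
  destruct (Q2R_posnat r hr) as [p [q [Hq Er]]].
  assert (Hrpos : 0 < Q2R r).
  { pose proof (Qlt_Rlt 0 r hr) as H. unfold Q2R at 1 in H; simpl in H. lra. }
  set (rr := Q2R r) in *.
  set (s := real_root k rr).
  assert (Hk : 0 < INR k) by (apply lt_0_INR; lia).
  assert (Hs : 0 < s) by (unfold s, real_root, Rpower; apply exp_pos).
  assert (Hsk : s ^ k = rr).
  { rewrite <- Rpower_pow by exact Hs. unfold s, real_root.
    rewrite Rpower_mult. replace (/ INR k * INR k) with 1 by (field; lra).
    apply Rpower_1; exact Hrpos. }
  set (x := / INR k * ln rr).
  assert (Ex : Cexp (RtoC x) = RtoC s) by (rewrite Cexp_R; reflexivity).
  assert (Hpow : Cpow (alpha (RtoC s)) k = RtoC rr).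
  { destruct Halpha as [Ha He] eqn:HH.
    rewrite <- Ex, He, Cpow_Cexp, <- alpha_nat by exact Halpha.
    rewrite <- He.
    replace (Cmult (RtoC (INR k)) (RtoC x)) with (RtoC (ln rr))
      by (unfold Cmult, RtoC, x; simpl; f_equal; field; lra).
    rewrite Cexp_R, exp_ln by exact Hrpos.
    rewrite Er. apply alpha_posrat; auto. }
  exists (Cmult (alpha (RtoC s)) (RtoC (/ s))). split.
  - rewrite Cpow_mul, Hpow, Cpow_R, pow_inv, Hsk.
    unfold Cmult, RtoC; simpl. f_equal; field; lra.
  - destruct (alpha (RtoC s)). unfold Cmult, RtoC; simpl. f_equal; field; lra.
Qed.
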